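(* For an integer $k\ge 2$, the graph $\Gamma_k$ is self color dual if and only if $k$ is a power of $2$.
   Context: Let $T_0(x)=x/2$ and $T_1(x)=(3x+1)/2$. For a positive integer $k$, $\Gamma_k$ is the directed graph on $\mathbb{Z}/k\mathbb{Z}$ with a black arrow $r\to s$ iff there exist positive integers $x\equiv r$, $y\equiv s\pmod k$ with $x$ even and $T_0(x)=y$, and a red arrow $r\to s$ iff there exist such $x,y$ with $x$ odd and $T_1(x)=y$. The color dual of a red/black edge-coloured digraph is obtained by swapping the colours of all arrows; the digraph is self color dual if there is a bijection $\rho$ of its vertex set such that for all vertices $u,w$: there is a black arrow $u\to w$ iff there is a red arrow $\rho(u)\to\rho(w)$, and there is a red arrow $u\to w$ iff there is a black arrow $\rho(u)\to\rho(w)$. *)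

(* Defs.v *)
From mathcomp Require Import all_boot.
Set Implicit Arguments. Unset Strict Implicit. Unset Printing Implicit Defensive.

(* Collatz-type maps on positive integers: T0 x = x/2 (x even), T1 x = (3x+1)/2 (x odd). *)

(* The graph Gamma_k on Z/kZ, vertices represented as residues 'I_k. *)

Definition black_arrow (k : nat) (r s : 'I_k) : Prop :=
  exists x y : nat, [/\ 0 < x, 0 < y, x %% k = r :> nat, y %% k = s :> nat &
                       ~~ odd x /\ x./2 = y].

Definition red_arrow (k : nat) (r s : 'I_k) : Prop :=
  exists x y : nat, [/\ 0 < x, 0 < y, x %% k = r :> nat, y %% k = s :> nat &
                       odd x /\ (3 * x + 1)./2 = y].

Definition self_color_dual (k : nat) : Prop :=
  exists rho : 'I_k -> 'I_k, bijective rho /\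
    forall u w : 'I_k,
      (black_arrow u w <-> red_arrow (rho u) (rho w)) /\
      (red_arrow u w <-> black_arrow (rho u) (rho w)).

(* Main.v *)
Require Import Defs.
From mathcomp Require Import all_boot all_algebra zify.
Import GRing.Theory Num.Theory.

Definition cg (d a b : nat) : Prop := exists q : int, (Posz a - Posz b = q * Posz d)%R.

Lemma modE (k x : nat) : cg k x (x %% k).
Proof. exists (Posz (x %/ k)). rewrite {1}(divn_eq x k). lia. Qed.

Lemma cg_small (k a b : nat) : a < k -> b < k -> cg k a b -> a = b.
Proof.
move=> ha hb [q e].
have [hq|[hq|hq]] : (q <= -1 \/ q = 0 \/ 1 <= q)%R by lia.
- nia.
- subst q; lia.
- nia.
Qed.

Lemma cg_mod (k x u : nat) : u < k -> cg k x u -> x %% k = u.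
Proof.
move=> hu [q e]. have kp : 0 < k by lia.
have [q1 e1] := modE k x.
apply: (@cg_small k (x %% k) u) => //; first by rewrite ltn_mod.
exists (q - q1)%R. lia.
Qed.

Lemma black_char k (u w : 'I_k) :
  black_arrow u w <-> exists t, (2*t+2) %% k = u /\ (t+1) %% k = w.
Proof.
split.
- move=> [x [y [hx hy hxu hyw [hev hxy]]]].
  exists y.-1. have e := odd_double_half x. rewrite (negbTE hev) hxy in e.
  split; last by rewrite -hyw; congr (_ %% _); lia.
  rewrite -hxu; congr (_ %% _). rewrite -e -muln2. lia.
- move=> [t [h1 h2]]. exists (2*t+2), (t+1). split => //; try lia.
Qed.

Lemma red_char k (u w : 'I_k) :
  red_arrow u w <-> exists t, (2*t+1) %% k = u /\ (3*t+2) %% k = w.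
Proof.
split.
- move=> [x [y [hx hy hxu hyw [hod hxy]]]].
  exists x./2. have e := odd_double_half x. rewrite hod in e.
  split; first by rewrite -hxu; congr (_ %% _); rewrite -e -muln2; lia.
  rewrite -hyw -hxy; congr (_ %% _).
  have -> : 3 * x + 1 = (3 * x./2 + 2).*2 by rewrite -e -!muln2; lia.
  by rewrite doubleK.
- move=> [t [h1 h2]]. exists (2*t+1), (3*t+2). split => //; try lia.
Qed.

Lemma decomp n : 0 < n -> exists a m, n = 2^a * m /\ odd m.
Proof.
elim: n {-2}n (leqnn n) => [|N IH] n hn hpos; first by lia.
case ho: (odd n); first by exists 0, n; rewrite expn0 mul1n.
have e := odd_double_half n. rewrite ho add0n in e.
have h1 : n./2 <= N by lia.
have h2 : 0 < n./2 by lia.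
have [a [m [e1 e2]]] := IH _ h1 h2.
exists a.+1, m. split => //. rewrite expnS. lia.
Qed.

Lemma cg_dvd d k a b : d %| k -> cg k a b -> cg d a b.
Proof. move/dvdnP=> [c ->] [q e]. exists (q * Posz c)%R. rewrite e PoszM. lia. Qed.

Arguments cg_dvd [d k a b].

Lemma no2 (q : int) (m : nat) : 3 <= m -> (2 = q * Posz m)%R -> False.
Proof. move=> h1 h2. have [hq|hq] : (q <= 0 \/ 1 <= q)%R by lia. nia. nia. Qed.

Lemma to_pow2 k (hk : 2 <= k) (rho : 'I_k -> 'I_k) :
  (forall u w : 'I_k,
      (black_arrow u w <-> red_arrow (rho u) (rho w)) /\
      (red_arrow u w <-> black_arrow (rho u) (rho w))) ->
  exists e, k = 2 ^ e.
Proof.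
move=> H.
have kp : 0 < k by lia.
have [a [m [ek om]]] := decomp k kp.
case: (eqVneq m 1) => [em|m1]; first by exists a; rewrite ek em muln1.
exfalso.
have m3 : 3 <= m.
  case: m ek om m1 => [|[|[|m]]] //; lia.
pose o n : 'I_k := Ordinal (ltn_pmod n kp).
pose r (x : 'I_k) : nat := rho x.
have Bc : forall x : 'I_k, cg k (3 * r (o (2 * x)) + 1) (2 * r x).
  move=> x.
  have hb : black_arrow (o (2 * x)) x.
    apply/black_char. exists (x + k - 1). split => /=.
    - apply: cg_mod; first by rewrite ltn_mod.
      have [q1 e1] := modE k (2 * x). exists (q1 + 2)%R. lia.
    - apply: cg_mod => //. exists 1%R. lia.
  have /red_char [t [h1 h2]] := (H _ _).1.1 hb.
  have [q1 e1] := modE k (2 * t + 1). have [q2 e2] := modE k (3 * t + 2).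
  rewrite h1 in e1. rewrite h2 in e2. rewrite /r.
  exists (2 * q2 - 3 * q1)%R. lia.
have Rc : forall t, cg k (r (o (2 * t + 1))) (2 * r (o (3 * t + 2))).
  move=> t.
  have hr : red_arrow (o (2 * t + 1)) (o (3 * t + 2)).
    by apply/red_char; exists t.
  have /black_char [s [h1 h2]] := (H _ _).2.1 hr.
  have [q1 e1] := modE k (2 * s + 2). have [q2 e2] := modE k (s + 1).
  rewrite h1 in e1. rewrite h2 in e2. rewrite /r.
  exists (2 * q2 - q1)%R. lia.
have Lp : r (o (k - 1)) = 0.
  have hr : red_arrow (o (k - 1)) (o (k - 1)).
    apply/red_char; exists (k - 1). split => /=.
    - apply: cg_mod; first by rewrite ltn_mod.
      have [q1 e1] := modE k (k - 1). exists (q1 + 1)%R. lia.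
    - apply: cg_mod; first by rewrite ltn_mod.
      have [q1 e1] := modE k (k - 1). exists (q1 + 2)%R. lia.
  have /black_char [s [h1 h2]] := (H _ _).2.1 hr.
  have [q1 e1] := modE k (2 * s + 2). have [q2 e2] := modE k (s + 1).
  rewrite h1 in e1. rewrite h2 in e2.
  have hc : cg k (r (o (k - 1))) 0 by exists (q1 - 2 * q2)%R; rewrite /r; lia.
  exact: (@cg_small k _ 0 (ltn_ord (rho (o (k - 1)))) kp hc).
have C2 : forall j i, i + j = a -> forall x y : 'I_k,
    cg (2^i * m) x y -> cg (2^i * m) (r x) (r y).
  elim=> [|j IH] i hij x y hxy.
  - rewrite addn0 in hij; subst i. rewrite -ek in hxy *.
    have exy : x = y by apply: val_inj; exact: (@cg_small k _ _ (ltn_ord x) (ltn_ord y) hxy).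
    subst y. exists 0%R. lia.
  - have hij' : i.+1 + j = a by lia.
    set D := 2^i * m.
    have eD : 2^(i.+1) * m = 2 * D by rewrite expnS /D mulnA.
    have dK : 2 * D %| k by rewrite ek -hij' addnC expnD -mulnA eD dvdn_mull.
    have h2 : cg (2^(i.+1) * m) (o (2 * x)) (o (2 * y)).
      rewrite eD. have [q e] := hxy. rewrite -/D in e.
      have [q1 e1] := cg_dvd dK (modE k (2 * x)).
      have [q2 e2] := cg_dvd dK (modE k (2 * y)).
      exists (q + q2 - q1)%R. rewrite /=. lia.
    have := IH _ hij' _ _ h2. rewrite eD => -[q3 e3].
    have [q4 e4] := cg_dvd dK (Bc x).
    have [q5 e5] := cg_dvd dK (Bc y).
    exists (3 * q3 - q4 + q5)%R. lia.
have C0 : forall x y : 'I_k, cg m x y -> cg m (r x) (r y).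
  by have := C2 a 0 (add0n a); rewrite expn0 mul1n.
have mK : m %| k by rewrite ek dvdn_mull.
have [t [qt et]] : exists t, cg m (4 * t + 3) 0.
  have : m %% 4 = 1 \/ m %% 4 = 3 by lia.
  have e4 := divn_eq m 4.
  case=> h.
  - exists (3 * (m %/ 4)), 3%R. lia.
  - exists (m %/ 4), 1%R. lia.
pose w0 := o (3 * t + 2). pose v2 := o (2 * t + 1).
pose v1 := o (2 * w0). pose u1 := o (2 * v1).
have [a1 h1] := cg_dvd mK (Rc t).
have [a2 h2] := cg_dvd mK (Bc w0).
have [qa ea] := cg_dvd mK (modE k (3 * t + 2)).
have [qb eb] := cg_dvd mK (modE k (2 * w0)).
have [qc ec] := cg_dvd mK (modE k (2 * t + 1)).
have [a3 h3] : cg m (r v1) (r v2).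
  apply: C0. exists (qt + qc - qb - 2 * qa)%R. rewrite /v1 /v2 /w0 /=. 
  rewrite /w0 /= in eb. lia.
have [a4 h4] := cg_dvd mK (Bc v1).
have [qd ed] := cg_dvd mK (modE k (2 * v1)).
have [qe ee] := cg_dvd mK (modE k (k - 1)).
have ekz : (Posz k = Posz (2 ^ a) * Posz m)%R by rewrite ek PoszM.
have [a5 h5] : cg m (r u1) (r (o (k - 1))).
  apply: C0. exists (3 * qt - Posz (2 ^ a) - qd + qe - 4 * qa - 2 * qb)%R.
  rewrite /u1 /v1 /w0 /= in ed eb *. lia.
rewrite Lp in h5.
rewrite -/v2 -/w0 in h1. rewrite -/v1 in h2. rewrite -/u1 in h4.
apply: (@no2 (a2 - a3 - a1 + a4 - 3 * a5)%R m m3). lia.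
Qed.

Definition Tc x := if odd x then (3 * x + 1)./2 else x./2.
Fixpoint Q n x := if n is n'.+1 then odd x + 2 * Q n' (Tc x) else 0.

Lemma Tc_even t : Tc (2 * t) = t.
Proof. rewrite /Tc. have -> : odd (2 * t) = false by lia. lia. Qed.
Lemma Tc_odd t : Tc (2 * t + 1) = 3 * t + 2.
Proof. rewrite /Tc. have -> : odd (2 * t + 1) = true by lia. lia. Qed.

Lemma F1 n x : Q n x < 2 ^ n.
Proof. elim: n x => [|n IH] x /=; first by []. have := IH (Tc x). rewrite expnS. lia. Qed.

Lemma F2 n x y : cg (2 ^ n) x y -> Q n x = Q n y.
Proof.
elim: n x y => [|n IH] x y //= [q e].
rewrite expnS in e.
have hp : odd x = odd y by lia.
rewrite hp. congr (_ + 2 * _). apply: IH.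
rewrite /Tc -hp. case: (boolP (odd x)) => ho.
- exists (3 * q)%R. lia.
- exists q. lia.
Qed.

Lemma F3 n x y : Q n x = Q n y -> cg (2 ^ n) x y.
Proof.
elim: n x y => [|n IH] x y /=; first by move=> _; exists (Posz x - Posz y)%R; lia.
move=> e.
have hp : odd x = odd y by lia.
have e2 : Q n (Tc x) = Q n (Tc y) by lia.
have [q eq] := IH _ _ e2.
move: eq. rewrite /Tc -hp. case: (boolP (odd x)) => ho eq.
- have hd : ((Posz x - Posz y) * 3)%R \in dvdz (Posz (2 ^ n.+1)).
    apply/dvdzP. exists q. rewrite expnS. lia.
  rewrite Gauss_dvdzl in hd; last first.
    rewrite /coprimez /gcdz /=. by rewrite (eqP (coprimeXl n.+1 (isT : coprime 2 3))).
  have [q' e'] := dvdzP hd. by exists q'.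
- exists q. rewrite expnS. lia.
Qed.

Lemma F4 n x : Q n.+1 x %% 2 ^ n = Q n x.
Proof.
elim: n x => [|n IH] x; first by rewrite expn0 modn1.
have IH' := IH (Tc x).
have -> : Q n.+2 x = odd x + 2 * Q n.+1 (Tc x) by [].
have E : Q n.+1 x = odd x + 2 * Q n (Tc x) by [].
rewrite E.
apply: cg_mod; first by have := F1 n.+1 x; rewrite E expnS.
have [q e] := modE (2 ^ n) (Q n.+1 (Tc x)). rewrite IH' in e.
exists q. rewrite expnS. lia.
Qed.

Arguments F3 [n x y].

Lemma cg_sym d x y : cg d x y -> cg d y x.
Proof. move=> [q e]; exists (- q)%R; lia. Qed.

Lemma arith K H z : K = 2 * H -> 0 < H -> z < K -> (K - z.+1) %% H = H - 1 - z %% H.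
Proof.
move=> eK hH hz. apply: cg_mod; first by lia.
have [q e] := modE H z. have := ltn_mod z H. rewrite hH => hm.
exists (1 - q)%R. lia.
Qed.

Lemma BQ a (u w : 'I_(2 ^ a.+1)) : black_arrow u w <-> Q a.+1 u = 2 * Q a w.
Proof.
have Kp : 0 < 2 ^ a.+1 by rewrite expn_gt0.
have dv : 2 ^ a %| 2 ^ a.+1 by rewrite expnS dvdn_mull.
have eK : 2 ^ a.+1 = 2 * 2 ^ a by rewrite expnS.
split.
- move/black_char => [t [h1 h2]].
  have -> : Q a.+1 u = Q a.+1 (2 * t + 2).
    apply: F2. rewrite -h1. apply: cg_sym. exact: modE.
  have -> : Q a.+1 (2 * t + 2) = odd (2 * t + 2) + 2 * Q a (Tc (2 * t + 2)) by [].
  have -> : 2 * t + 2 = 2 * (t + 1) by lia.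
  rewrite Tc_even. have -> : odd (2 * (t + 1)) = false by lia.
  rewrite add0n. congr (2 * _). apply: F2. rewrite -h2. exact: cg_dvd dv (modE _ _).
- move=> e. apply/black_char. exists (w + 2 ^ a.+1 - 1). split.
  + apply: cg_mod => //. apply: cg_sym. apply: F3. rewrite e.
    have -> : Q a.+1 (2 * (w + 2 ^ a.+1 - 1) + 2) =
       odd (2 * (w + 2 ^ a.+1 - 1) + 2) + 2 * Q a (Tc (2 * (w + 2 ^ a.+1 - 1) + 2)) by [].
    have -> : 2 * (w + 2 ^ a.+1 - 1) + 2 = 2 * (w + 2 ^ a.+1) by lia.
    rewrite Tc_even. have -> : odd (2 * (w + 2 ^ a.+1)) = false by lia.
    rewrite add0n. congr (2 * _). apply: F2. exists (-2)%R. lia.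
  + apply: (@cg_mod (2 ^ a.+1) _ w (ltn_ord w)). exists 1%R. lia.
Qed.

Lemma RQ a (u w : 'I_(2 ^ a.+1)) : red_arrow u w <-> Q a.+1 u = 2 * Q a w + 1.
Proof.
have Kp : 0 < 2 ^ a.+1 by rewrite expn_gt0.
have dv : 2 ^ a %| 2 ^ a.+1 by rewrite expnS dvdn_mull.
have eK : 2 ^ a.+1 = 2 * 2 ^ a by rewrite expnS.
split.
- move/red_char => [t [h1 h2]].
  have -> : Q a.+1 u = Q a.+1 (2 * t + 1).
    apply: F2. rewrite -h1. apply: cg_sym. exact: modE.
  have -> : Q a.+1 (2 * t + 1) = odd (2 * t + 1) + 2 * Q a (Tc (2 * t + 1)) by [].
  rewrite Tc_odd. have -> : odd (2 * t + 1) = true by lia.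
  rewrite addnC. congr (2 * _ + _). apply: F2. rewrite -h2. exact: cg_dvd dv (modE _ _).
- move=> e.
  have E : Q a.+1 u = odd u + 2 * Q a (Tc u) by [].
  have ou : odd u by lia.
  have eu : nat_of_ord u = 2 * u./2 + 1 by lia.
  set s := u./2 in eu.
  have e2 : Q a (3 * s + 2) = Q a w by rewrite -Tc_odd -eu; lia.
  have [p ep] := F3 e2.
  have [c [hc|hc]] : exists c : int, (p = 2 * c \/ p = 2 * c + 1)%R.
    by exists (p %/ 2)%Z; lia.
  + apply/red_char. exists s. split.
    * apply: cg_mod => //. exists 0%R. lia.
    * apply: cg_mod => //. exists c. lia.
  + apply/red_char. exists (s + 2 ^ a). split.
    * apply: cg_mod => //. exists 1%R. lia.
    * apply: cg_mod => //. exists (c + 2)%R. lia.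
Qed.

Lemma from_pow2 a : self_color_dual (2 ^ a.+1).
Proof.
have Kp : 0 < 2 ^ a.+1 by rewrite expn_gt0.
have eK : 2 ^ a.+1 = 2 * 2 ^ a by rewrite expnS.
have Hp : 0 < 2 ^ a by rewrite expn_gt0.
pose q (x : 'I_(2 ^ a.+1)) : 'I_(2 ^ a.+1) := Ordinal (F1 a.+1 x).
have qinj : injective q.
  move=> x y /(congr1 val) e. have e1 : Q a.+1 x = Q a.+1 y := e. apply: ord_inj.
  exact: (@cg_small (2 ^ a.+1) _ _ (ltn_ord x) (ltn_ord y) (F3 e1)).
pose qi := invF qinj.
pose rho x := qi (rev_ord (q x)).
have qrho : forall x, Q a.+1 (rho x) = 2 ^ a.+1 - (Q a.+1 x).+1.
  move=> x. have := f_invF qinj (rev_ord (q x)). by move/(congr1 val).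
exists rho. split.
- exists rho => x; by rewrite /rho /qi f_invF rev_ordK invF_f.
- move=> u w. rewrite BQ RQ BQ RQ.
  rewrite -(F4 a w) -(F4 a (rho w)) !qrho.
  have hu := F1 a.+1 u. have hw := F1 a.+1 w.
  rewrite (arith _ _ _ eK Hp hw).
  have := ltn_mod (Q a.+1 w) (2 ^ a). rewrite Hp => hm.
  split; split; lia.
Qed.

Theorem mainTheorem17 (k : nat) (hk : 2 <= k) :
  self_color_dual k <-> exists e : nat, k = 2 ^ e.
Proof.
split.
- move=> [rho [_ H]]. exact: (@to_pow2 k hk rho H).
- move=> [[|e] ek]; first by rewrite ek in hk.
  rewrite ek. exact: from_pow2.
Qed.
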